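(* The assignments $\mathcal{C}\mapsto\mathcal{C}_q$, $F\mapsto F_q$, $\alpha\mapsto\alpha_q$ are well defined (each $F_q$ is a strict monoidal functor and each $\alpha_q$ a monoidal natural transformation) and define a 2-functor $q:\mathsf{MonCat}\to\mathsf{nonstrMonCat}$.
   Context: 2-categories and 2-functors are $\mathbf{Cat}$-enriched categories and functors. $\mathsf{MonCat}$: monoidal categories, strong monoidal functors, monoidal natural transformations; $\mathsf{nonstrMonCat}$: non-strict monoidal categories (those whose constraints are not all identities), strict monoidal functors, monoidal natural transformations. Non-strictification $\mathcal{C}_q$ of $(\mathcal{C},\otimes,\mathbf{1},a,\ell,r)$: with $\mathrm{Mag}(\bullet)$ the free unital magma on one generator and $|t|$ the number of bullets, objects are pairs $(S,t)$, $S$ a finite sequence of objects of $\mathcal{C}$, $|t|=$ length of $S$; $\mathrm{Par}(\emptyset,\emptyset)=\mathbf{1}$, $\mathrm{Par}((X),\bullet)=X$, for $|t|>1$, $t=t_1t_2$ uniquely with $|t_k|\ge1$, $S=S_1*S_2$ with $S_k$ of length $|t_k|$, $\mathrm{Par}(S,t)=\mathrm{Par}(S_1,t_1)\otimes\mathrm{Par}(S_2,t_2)$; $\mathrm{Hom}_{\mathcal{C}_q}((S,t),(S',t'))=\mathrm{Hom}_{\mathcal{C}}(\mathrm{Par}(S,t),\mathrm{Par}(S',t'))$; monoidal product $(S,t)*(S',t')=(S*S',tt')$, strict unit $(\emptyset,\emptyset)$, $f*g:=f\otimes g$, identity unit constraints, associator $a_q$ with $\mathrm{Par}(a_q)=a_{\mathrm{Par}(S,t),\mathrm{Par}(S',t'),\mathrm{Par}(S'',t'')}$.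 For strong monoidal $(F,\gamma,u):(\mathcal{C},\otimes,\mathbf{1})\to(\mathcal{D},\boxtimes,\mathbb{1})$: $F_q((X_1,\dots,X_n),t)=((FX_1,\dots,FX_n),t)$, $F_q(\emptyset,\emptyset)=(\emptyset,\emptyset)$; isomorphisms $\beta_{(S,t)}:\mathrm{Par}(F_q(S,t))\to F(\mathrm{Par}(S,t))$ are defined by $\beta_{(\emptyset,\emptyset)}=u$, $\beta_{((X),\bullet)}=\mathrm{Id}_{FX}$, and for $(S,t)=(S_1,t_1)*(S_2,t_2)$ with nonempty factors, $\beta_{(S,t)}=\gamma_{\mathrm{Par}(S_1,t_1),\mathrm{Par}(S_2,t_2)}\circ(\beta_{(S_1,t_1)}\boxtimes\beta_{(S_2,t_2)})$; for $f:(S,t)\to(S',t')$, $\mathrm{Par}(F_q f)=\beta_{(S',t')}^{-1}\circ F(\mathrm{Par}f)\circ\beta_{(S,t)}$. For monoidal $\alpha:F\Rightarrow G$, $\mathrm{Par}((\alpha_q)_{(S,t)})=\alpha_{X_1}\boxtimes\cdots\boxtimes\alpha_{X_n}$ parenthesised according to $t$, where $S=(X_1,\dots,X_n)$. *)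

(* Defs.v *)
Record Cat : Type := MkCat {
  ob :> Type;
  hom : ob -> ob -> Type;
  idm : forall a, hom a a;
  comp : forall a b c, hom b c -> hom a b -> hom a c }.

Arguments idm {_} _.
Arguments comp {_ _ _ _} _ _.

Definition is_cat (C : Cat) : Prop :=
  (forall a b (f : hom C a b), comp (idm b) f = f) /\
  (forall a b (f : hom C a b), comp f (idm a) = f) /\
  (forall a b c d (f : hom C a b) (g : hom C b c) (h : hom C c d),
      comp h (comp g f) = comp (comp h g) f).

Definition eq_hom {C : Cat} {a b : C} (e : a = b) : hom C a b :=
  match e in _ = y return hom C a y with eq_refl => idm a end.

Definition is_identity {C : Cat} {a b : C} (f : hom C a b) : Prop :=
  exists e : a = b, f = eq_hom e.

Definition inverse_pair {C : Cat} {a b : C} (f : hom C a b) (g : hom C b a) : Prop :=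
  comp g f = idm a /\ comp f g = idm b.

Record MonData : Type := MkMon {
  mcat :> Cat;
  tens : mcat -> mcat -> mcat;
  tensm : forall a b c d, hom mcat a b -> hom mcat c d ->
          hom mcat (tens a c) (tens b d);
  munit : mcat;
  massoc : forall x y z, hom mcat (tens (tens x y) z) (tens x (tens y z));
  massoc_inv : forall x y z, hom mcat (tens x (tens y z)) (tens (tens x y) z);
  mlunit : forall x, hom mcat (tens munit x) x;
  mlunit_inv : forall x, hom mcat x (tens munit x);
  mrunit : forall x, hom mcat (tens x munit) x;
  mrunit_inv : forall x, hom mcat x (tens x munit) }.

Arguments tens {m} _ _.
Arguments tensm {m a b c d} _ _.
Arguments massoc {m} x y z.
Arguments massoc_inv {m} x y z.
Arguments mlunit {m} x.
Arguments mlunit_inv {m} x.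
Arguments mrunit {m} x.
Arguments mrunit_inv {m} x.

Definition is_moncat (M : MonData) : Prop :=
  is_cat M /\
  (forall a b : M, tensm (idm a) (idm b) = idm (tens a b)) /\
  (forall a b c a' b' c' (f : hom M a b) (g : hom M b c)
          (f' : hom M a' b') (g' : hom M b' c'),
      tensm (comp g f) (comp g' f') = comp (tensm g g') (tensm f f')) /\
  (forall a a' a'' b b' b'' (f : hom M a b) (f' : hom M a' b') (f'' : hom M a'' b''),
      comp (massoc b b' b'') (tensm (tensm f f') f'')
      = comp (tensm f (tensm f' f'')) (massoc a a' a'')) /\
  (forall x y z : M, inverse_pair (massoc x y z) (massoc_inv x y z)) /\
  (forall a b (f : hom M a b),
      comp (mlunit b) (tensm (idm (munit M)) f) = comp f (mlunit a)) /\
  (forall x : M, inverse_pair (mlunit x) (mlunit_inv x)) /\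
  (forall a b (f : hom M a b),
      comp (mrunit b) (tensm f (idm (munit M))) = comp f (mrunit a)) /\
  (forall x : M, inverse_pair (mrunit x) (mrunit_inv x)) /\
  (forall w x y z : M,
      comp (massoc w x (tens y z)) (massoc (tens w x) y z)
      = comp (tensm (idm w) (massoc x y z))
             (comp (massoc w (tens x y) z) (tensm (massoc w x y) (idm z)))) /\
  (forall x y : M,
      comp (tensm (idm x) (mlunit y)) (massoc x (munit M) y)
      = tensm (mrunit x) (idm y)).

Definition is_strict_moncat (M : MonData) : Prop :=
  (forall x y z : M, is_identity (massoc x y z)) /\
  (forall x : M, is_identity (mlunit x)) /\
  (forall x : M, is_identity (mrunit x)).

Definition is_nonstrict (M : MonData) : Prop := ~ is_strict_moncat M.

Record MonFun (C D : MonData) : Type := MkMonFun {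
  fob : C -> D;
  fmap : forall a b, hom C a b -> hom D (fob a) (fob b);
  fgam : forall x y, hom D (tens (fob x) (fob y)) (fob (tens x y));
  fgam_inv : forall x y, hom D (fob (tens x y)) (tens (fob x) (fob y));
  funit : hom D (munit D) (fob (munit C));
  funit_inv : hom D (fob (munit C)) (munit D) }.

Arguments MkMonFun {C D} _ _ _ _ _ _.
Arguments fob {C D} _ _.
Arguments fmap {C D} _ {a b} _.
Arguments fgam {C D} _ x y.
Arguments fgam_inv {C D} _ x y.
Arguments funit {C D} _.
Arguments funit_inv {C D} _.

Definition is_strong {C D : MonData} (F : MonFun C D) : Prop :=
  (forall a : C, fmap F (idm a) = idm (fob F a)) /\
  (forall a b c (f : hom C a b) (g : hom C b c),
      fmap F (comp g f) = comp (fmap F g) (fmap F f)) /\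
  (forall a a' b b' (f : hom C a b) (f' : hom C a' b'),
      comp (fgam F b b') (tensm (fmap F f) (fmap F f'))
      = comp (fmap F (tensm f f')) (fgam F a a')) /\
  (forall x y : C, inverse_pair (fgam F x y) (fgam_inv F x y)) /\
  inverse_pair (funit F) (funit_inv F) /\
  (forall x y z : C,
      comp (fmap F (massoc x y z))
           (comp (fgam F (tens x y) z) (tensm (fgam F x y) (idm (fob F z))))
      = comp (fgam F x (tens y z))
             (comp (tensm (idm (fob F x)) (fgam F y z))
                   (massoc (fob F x) (fob F y) (fob F z)))) /\
  (forall x : C,
      comp (fmap F (mlunit x))
           (comp (fgam F (munit C) x) (tensm (funit F) (idm (fob F x))))
      = mlunit (fob F x)) /\
  (forall x : C,
      comp (fmap F (mrunit x))
           (comp (fgam F x (munit C)) (tensm (idm (fob F x)) (funit F)))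
      = mrunit (fob F x)).

Definition is_strict {C D : MonData} (F : MonFun C D) : Prop :=
  is_strong F /\ (forall x y : C, is_identity (fgam F x y)) /\ is_identity (funit F).

Definition idMF (C : MonData) : MonFun C C :=
  MkMonFun (fun x => x) (fun a b f => f)
    (fun x y => idm (tens x y)) (fun x y => idm (tens x y))
    (idm (munit C)) (idm (munit C)).

Definition compMF {C D E : MonData} (G : MonFun D E) (F : MonFun C D) : MonFun C E :=
  MkMonFun (fun x => fob G (fob F x)) (fun a b f => fmap G (fmap F f))
    (fun x y => comp (fmap G (fgam F x y)) (fgam G (fob F x) (fob F y)))
    (fun x y => comp (fgam_inv G (fob F x) (fob F y)) (fmap G (fgam_inv F x y)))
    (comp (fmap G (funit F)) (funit G))
    (comp (funit_inv G) (fmap G (funit_inv F))).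

Definition NatData {C D : MonData} (F G : MonFun C D) : Type :=
  forall x : C, hom D (fob F x) (fob G x).

Definition is_monnat {C D : MonData} {F G : MonFun C D} (a : NatData F G) : Prop :=
  (forall x y (f : hom C x y), comp (a y) (fmap F f) = comp (fmap G f) (a x)) /\
  (forall x y : C, comp (a (tens x y)) (fgam F x y) = comp (fgam G x y) (tensm (a x) (a y))) /\
  comp (a (munit C)) (funit F) = funit G.

Definition idN {C D : MonData} (F : MonFun C D) : NatData F F :=
  fun x => idm (fob F x).

Definition vcomp {C D : MonData} {F G H : MonFun C D}
  (b : NatData G H) (a : NatData F G) : NatData F H :=
  fun x => comp (b x) (a x).

Definition hcomp {C D E : MonData} {F F' : MonFun C D} {G G' : MonFun D E}
  (b : NatData G G') (a : NatData F F') : NatData (compMF G F) (compMF G' F') :=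
  fun x => comp (b (fob F' x)) (fmap G (a x)).

Definition castN {C D : MonData} {F G F' G' : MonFun C D}
  (e1 : F = F') (e2 : G = G') (a : NatData F G) : NatData F' G' :=
  match e1 in _ = F1 return NatData F1 G' with
  | eq_refl => match e2 in _ = G1 return NatData F G1 with eq_refl => a end
  end.

(* An object (S,t) with t in the free unital magma Mag(bullet) and S a
   sequence of length |t| is encoded as: None for (empty, empty), and
   Some T for nonempty t, where T is the binary tree t whose bullets are
   labelled, left to right, by the entries of S. *)
Inductive ntree (A : Type) : Type :=
| Leaf (x : A)
| Node (l r : ntree A).
Arguments Leaf {A} x.
Arguments Node {A} l r.

Fixpoint ntree_map {A B : Type} (f : A -> B) (t : ntree A) : ntree B :=
  match t with
  | Leaf x => Leaf (f x)
  | Node l r => Node (ntree_map f l) (ntree_map f r)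
  end.

Definition qob (C : MonData) : Type := option (ntree C).

Fixpoint parN (C : MonData) (t : ntree C) : C :=
  match t with
  | Leaf x => x
  | Node l r => tens (parN C l) (parN C r)
  end.

Definition Par (C : MonData) (o : qob C) : C :=
  match o with None => munit C | Some t => parN C t end.

(* (S,t) * (S',t') = (S*S', t t')  (unital magma product) *)
Definition qtens {A : Type} (o o' : option (ntree A)) : option (ntree A) :=
  match o with
  | None => o'
  | Some a => match o' with None => Some a | Some b => Some (Node a b) end
  end.

Definition qphi (C : MonData) (o o' : qob C) :
  hom C (tens (Par C o) (Par C o')) (Par C (qtens o o')) :=
  match o as o0 return hom C (tens (Par C o0) (Par C o')) (Par C (qtens o0 o')) with
  | None => mlunit (Par C o')
  | Some a =>
      match o' as o1 return hom C (tens (parN C a) (Par C o1)) (Par C (qtens (Some a) o1)) with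
      | None => mrunit (parN C a)
      | Some b => idm (tens (parN C a) (parN C b))
      end
  end.

Definition qphi_inv (C : MonData) (o o' : qob C) :
  hom C (Par C (qtens o o')) (tens (Par C o) (Par C o')) :=
  match o as o0 return hom C (Par C (qtens o0 o')) (tens (Par C o0) (Par C o')) with
  | None => mlunit_inv (Par C o')
  | Some a =>
      match o' as o1 return hom C (Par C (qtens (Some a) o1)) (tens (parN C a) (Par C o1)) with
      | None => mrunit_inv (parN C a)
      | Some b => idm (tens (parN C a) (parN C b))
      end
  end.

Definition qcat (C : MonData) : Cat :=
  MkCat (qob C) (fun o o' => hom C (Par C o) (Par C o'))
        (fun o => idm (Par C o)) (fun a b c g f => comp g f).

(* f * g := f (x) g  (conjugated by the canonical isos above, which are
   identities when all four objects are nonempty) *)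
Definition qtensm (C : MonData) (o1 o2 o3 o4 : qob C)
  (f : hom C (Par C o1) (Par C o2)) (g : hom C (Par C o3) (Par C o4)) :
  hom C (Par C (qtens o1 o3)) (Par C (qtens o2 o4)) :=
  comp (qphi C o2 o4) (comp (tensm f g) (qphi_inv C o1 o3)).

Definition qassoc (C : MonData) (o o' o'' : qob C) :
  hom C (Par C (qtens (qtens o o') o'')) (Par C (qtens o (qtens o' o''))) :=
  match o as x return hom C (Par C (qtens (qtens x o') o'')) (Par C (qtens x (qtens o' o''))) with
  | None => idm _
  | Some a =>
    match o' as y return hom C (Par C (qtens (qtens (Some a) y) o''))
                               (Par C (qtens (Some a) (qtens y o''))) with
    | None => idm _
    | Some b =>
      match o'' as z return hom C (Par C (qtens (Some (Node a b)) z))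
                                  (Par C (qtens (Some a) (qtens (Some b) z))) with
      | None => idm _
      | Some c => massoc (parN C a) (parN C b) (parN C c)
      end
    end
  end.

Definition qassoc_inv (C : MonData) (o o' o'' : qob C) :
  hom C (Par C (qtens o (qtens o' o''))) (Par C (qtens (qtens o o') o'')) :=
  match o as x return hom C (Par C (qtens x (qtens o' o''))) (Par C (qtens (qtens x o') o'')) with
  | None => idm _
  | Some a =>
    match o' as y return hom C (Par C (qtens (Some a) (qtens y o'')))
                               (Par C (qtens (qtens (Some a) y) o'')) with
    | None => idm _
    | Some b =>
      match o'' as z return hom C (Par C (qtens (Some a) (qtens (Some b) z)))
                                  (Par C (qtens (Some (Node a b)) z)) with
      | None => idm _
      | Some c => massoc_inv (parN C a) (parN C b) (parN C c)
      end
    end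
  end.

Definition qrunit (C : MonData) (o : qob C) : hom C (Par C (qtens o None)) (Par C o) :=
  match o as x return hom C (Par C (qtens x None)) (Par C x) with
  | None => idm _ | Some a => idm _ end.
Definition qrunit_inv (C : MonData) (o : qob C) : hom C (Par C o) (Par C (qtens o None)) :=
  match o as x return hom C (Par C x) (Par C (qtens x None)) with
  | None => idm _ | Some a => idm _ end.

Definition qmon (C : MonData) : MonData :=
  MkMon (qcat C) qtens (qtensm C) None
        (qassoc C) (qassoc_inv C)
        (fun o => idm (Par C o)) (fun o => idm (Par C o))
        (qrunit C) (qrunit_inv C).

Definition qfob {C D : MonData} (F : MonFun C D) (o : qob C) : qob D :=
  option_map (ntree_map (fob F)) o.

Fixpoint betaN {C D : MonData} (F : MonFun C D) (t : ntree C) :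
  hom D (parN D (ntree_map (fob F) t)) (fob F (parN C t)) :=
  match t as t0 return hom D (parN D (ntree_map (fob F) t0)) (fob F (parN C t0)) with
  | Leaf x => idm (fob F x)
  | Node l r => comp (fgam F (parN C l) (parN C r)) (tensm (betaN F l) (betaN F r))
  end.

Fixpoint betaN_inv {C D : MonData} (F : MonFun C D) (t : ntree C) :
  hom D (fob F (parN C t)) (parN D (ntree_map (fob F) t)) :=
  match t as t0 return hom D (fob F (parN C t0)) (parN D (ntree_map (fob F) t0)) with
  | Leaf x => idm (fob F x)
  | Node l r => comp (tensm (betaN_inv F l) (betaN_inv F r)) (fgam_inv F (parN C l) (parN C r))
  end.

Definition qbeta {C D : MonData} (F : MonFun C D) (o : qob C) :
  hom D (Par D (qfob F o)) (fob F (Par C o)) :=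
  match o as x return hom D (Par D (qfob F x)) (fob F (Par C x)) with
  | None => funit F | Some t => betaN F t end.

Definition qbeta_inv {C D : MonData} (F : MonFun C D) (o : qob C) :
  hom D (fob F (Par C o)) (Par D (qfob F o)) :=
  match o as x return hom D (fob F (Par C x)) (Par D (qfob F x)) with
  | None => funit_inv F | Some t => betaN_inv F t end.

Definition qfmap {C D : MonData} (F : MonFun C D) (o o' : qob C)
  (f : hom C (Par C o) (Par C o')) : hom D (Par D (qfob F o)) (Par D (qfob F o')) :=
  comp (qbeta_inv F o') (comp (fmap F f) (qbeta F o)).

Definition qfgam {C D : MonData} (F : MonFun C D) (o o' : qob C) :
  hom D (Par D (qtens (qfob F o) (qfob F o'))) (Par D (qfob F (qtens o o'))) :=
  match o as x return hom D (Par D (qtens (qfob F x) (qfob F o'))) (Par D (qfob F (qtens x o'))) with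
  | None => idm _
  | Some a =>
    match o' as y return hom D (Par D (qtens (qfob F (Some a)) (qfob F y)))
                               (Par D (qfob F (qtens (Some a) y))) with
    | None => idm _
    | Some b => idm _
    end
  end.

Definition qfgam_inv {C D : MonData} (F : MonFun C D) (o o' : qob C) :
  hom D (Par D (qfob F (qtens o o'))) (Par D (qtens (qfob F o) (qfob F o'))) :=
  match o as x return hom D (Par D (qfob F (qtens x o'))) (Par D (qtens (qfob F x) (qfob F o'))) with
  | None => idm _
  | Some a =>
    match o' as y return hom D (Par D (qfob F (qtens (Some a) y)))
                               (Par D (qtens (qfob F (Some a)) (qfob F y))) with
    | None => idm _
    | Some b => idm _
    end
  end.

Definition qF {C D : MonData} (F : MonFun C D) : MonFun (qmon C) (qmon D) :=
  MkMonFun (C := qmon C) (D := qmon D) (qfob F) (qfmap F) (qfgam F) (qfgam_inv F)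
           (idm (munit D)) (idm (munit D)).

Fixpoint alphaN {C D : MonData} {F G : MonFun C D} (a : NatData F G) (t : ntree C) :
  hom D (parN D (ntree_map (fob F) t)) (parN D (ntree_map (fob G) t)) :=
  match t as t0 return hom D (parN D (ntree_map (fob F) t0)) (parN D (ntree_map (fob G) t0)) with
  | Leaf x => a x
  | Node l r => tensm (alphaN a l) (alphaN a r)
  end.

Definition qN {C D : MonData} {F G : MonFun C D} (a : NatData F G) : NatData (qF F) (qF G) :=
  fun o => match o as x return hom D (Par D (qfob F x)) (Par D (qfob G x)) with
           | None => idm (munit D)
           | Some t => alphaN a t
           end.

(* Main.v *)
Require Import Defs.
From Stdlib Require Import ProofIrrelevance FunctionalExtensionality.

Lemma cidl {C : Cat} (H : is_cat C) {a b} (f : hom C a b) : comp (idm b) f = f.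
Proof. apply H. Qed.
Lemma cidr {C : Cat} (H : is_cat C) {a b} (f : hom C a b) : comp f (idm a) = f.
Proof. apply H. Qed.
Lemma cassoc {C : Cat} (H : is_cat C) {a b c d} (f : hom C a b) (g : hom C b c) (h : hom C c d) :
  comp h (comp g f) = comp (comp h g) f.
Proof. apply H. Qed.


Lemma mcat {M : MonData} (H : is_moncat M) : is_cat M. Proof. apply H. Qed.
Lemma t_id {M : MonData} (H : is_moncat M) (a b : M) : tensm (idm a) (idm b) = idm (tens a b).
Proof. apply H. Qed.
Lemma t_comp {M : MonData} (H : is_moncat M) {a b c a' b' c'} (f : hom M a b) (g : hom M b c)
  (f' : hom M a' b') (g' : hom M b' c') :
  tensm (comp g f) (comp g' f') = comp (tensm g g') (tensm f f').
Proof. apply H. Qed.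
Lemma a_nat {M : MonData} (H : is_moncat M) {a a' a'' b b' b''} (f : hom M a b) (f' : hom M a' b') (f'' : hom M a'' b'') :
  comp (massoc b b' b'') (tensm (tensm f f') f'') = comp (tensm f (tensm f' f'')) (massoc a a' a'').
Proof. apply H. Qed.
Lemma a_iso {M : MonData} (H : is_moncat M) (x y z : M) : inverse_pair (massoc x y z) (massoc_inv x y z).
Proof. apply H. Qed.
Lemma l_nat {M : MonData} (H : is_moncat M) {a b} (f : hom M a b) :
  comp (mlunit b) (tensm (idm (munit M)) f) = comp f (mlunit a).
Proof. apply H. Qed.
Lemma l_iso {M : MonData} (H : is_moncat M) (x : M) : inverse_pair (mlunit x) (mlunit_inv x).
Proof. apply H. Qed.
Lemma r_nat {M : MonData} (H : is_moncat M) {a b} (f : hom M a b) :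
  comp (mrunit b) (tensm f (idm (munit M))) = comp f (mrunit a).
Proof. apply H. Qed.
Lemma r_iso {M : MonData} (H : is_moncat M) (x : M) : inverse_pair (mrunit x) (mrunit_inv x).
Proof. apply H. Qed.
Lemma pent {M : MonData} (H : is_moncat M) (w x y z : M) :
      comp (massoc w x (tens y z)) (massoc (tens w x) y z)
      = comp (tensm (idm w) (massoc x y z))
             (comp (massoc w (tens x y) z) (tensm (massoc w x y) (idm z))).
Proof. apply H. Qed.
Lemma tri {M : MonData} (H : is_moncat M) (x y : M) :
      comp (tensm (idm x) (mlunit y)) (massoc x (munit M) y)
      = tensm (mrunit x) (idm y).
Proof. apply H. Qed.

Lemma inv_l {C : Cat} (H : is_cat C) {a b} (f : hom C a b) g : inverse_pair f g -> comp g f = idm a.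
Proof. intros [h _]; exact h. Qed.
Lemma inv_r {C : Cat} (H : is_cat C) {a b} (f : hom C a b) g : inverse_pair f g -> comp f g = idm b.
Proof. intros [_ h]; exact h. Qed.
Lemma cancel_l {C : Cat} (H : is_cat C) {a b c} (f : hom C a b) g (h : hom C c a) :
  inverse_pair f g -> comp g (comp f h) = h.
Proof. intros [h1 _]. rewrite (cassoc H), h1. apply (cidl H). Qed.
Lemma cancel_r {C : Cat} (H : is_cat C) {a b c} (f : hom C a b) g (h : hom C c b) :
  inverse_pair f g -> comp f (comp g h) = h.
Proof. intros [_ h1]. rewrite (cassoc H), h1. apply (cidl H). Qed.
Lemma inv_sym {C : Cat} {a b} (f : hom C a b) g : inverse_pair f g -> inverse_pair g f.
Proof. intros [h1 h2]; split; assumption. Qed.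
Lemma epi_iso {C : Cat} (H : is_cat C) {a b c} (f : hom C a b) g (h k : hom C b c) :
  inverse_pair f g -> comp h f = comp k f -> h = k.
Proof.
  intros Hi E. rewrite <- (cidr H h), <- (cidr H k), <- (inv_r H f g Hi), !(cassoc H), E. reflexivity.
Qed.
Lemma mono_iso {C : Cat} (H : is_cat C) {a b c} (f : hom C a b) g (h k : hom C c a) :
  inverse_pair f g -> comp f h = comp f k -> h = k.
Proof.
  intros Hi E. rewrite <- (cidl H h), <- (cidl H k), <- (inv_l H f g Hi), <- !(cassoc H), E. reflexivity.
Qed.
Lemma inv_comp {C : Cat} (H : is_cat C) {a b c} (f : hom C a b) f' (g : hom C b c) g' :
  inverse_pair f f' -> inverse_pair g g' -> inverse_pair (comp g f) (comp f' g').
Proof.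
  intros Hf Hg; split.
  - rewrite <- (cassoc H), (cancel_l H g g' f Hg). apply (inv_l H _ _ Hf).
  - rewrite <- (cassoc H), (cancel_r H f f' g' Hf). apply (inv_r H _ _ Hg).
Qed.
Lemma inv_tens {M : MonData} (H : is_moncat M) {a b c d} (f : hom M a b) f' (g : hom M c d) g' :
  inverse_pair f f' -> inverse_pair g g' -> inverse_pair (tensm f g) (tensm f' g').
Proof.
  intros Hf Hg; split; rewrite <- (t_comp H).
  - rewrite (inv_l (mcat H) _ _ Hf), (inv_l (mcat H) _ _ Hg). apply (t_id H).
  - rewrite (inv_r (mcat H) _ _ Hf), (inv_r (mcat H) _ _ Hg). apply (t_id H).
Qed.
Lemma inv_id {C : Cat} (H : is_cat C) (a : C) : inverse_pair (idm a) (idm a).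
Proof. split; apply (cidl H). Qed.

Lemma t_comp_l1 {M : MonData} (H : is_moncat M) {a b c} (x : M) (f : hom M a b) (g : hom M b c) :
  tensm (idm x) (comp g f) = comp (tensm (idm x) g) (tensm (idm x) f).
Proof. rewrite <- (t_comp H), (cidl (mcat H)). reflexivity. Qed.
Lemma t_comp_r1 {M : MonData} (H : is_moncat M) {a b c} (x : M) (f : hom M a b) (g : hom M b c) :
  tensm (comp g f) (idm x) = comp (tensm g (idm x)) (tensm f (idm x)).
Proof. rewrite <- (t_comp H), (cidl (mcat H)). reflexivity. Qed.

Lemma faith_l {M : MonData} (H : is_moncat M) {a b} (g h : hom M a b) :
  tensm (idm (munit M)) g = tensm (idm (munit M)) h -> g = h.
Proof.
  intros E. apply (epi_iso (mcat H) (mlunit a) (mlunit_inv a) _ _ (l_iso H a)).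
  rewrite <- !(l_nat H), E. reflexivity.
Qed.
Lemma faith_r {M : MonData} (H : is_moncat M) {a b} (g h : hom M a b) :
  tensm g (idm (munit M)) = tensm h (idm (munit M)) -> g = h.
Proof.
  intros E. apply (epi_iso (mcat H) (mrunit a) (mrunit_inv a) _ _ (r_iso H a)).
  rewrite <- !(r_nat H), E. reflexivity.
Qed.

Lemma kellyL {M : MonData} (H : is_moncat M) (x y : M) :
  comp (mlunit (tens x y)) (massoc (munit M) x y) = tensm (mlunit x) (idm y).
Proof.
  pose proof (mcat H) as Hc.
  apply (faith_l H).
  apply (epi_iso Hc (comp (massoc (munit M) (tens (munit M) x) y) (tensm (massoc (munit M) (munit M) x) (idm y)))
                    (comp (tensm (massoc_inv (munit M) (munit M) x) (idm y)) (massoc_inv (munit M) (tens (munit M) x) y))).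
  { apply (inv_comp Hc). apply (inv_tens H). apply (a_iso H). apply (inv_id Hc). apply (a_iso H). }
  rewrite (t_comp_l1 H). rewrite <- (cassoc Hc), <- (pent H).
  rewrite (cassoc Hc), (tri H), <- (t_id H x y), <- (a_nat H).
  rewrite <- (tri H (munit M) x), (t_comp_r1 H), (cassoc Hc), (a_nat H).
  rewrite <- (cassoc Hc). reflexivity.
Qed.

Lemma kellyR {M : MonData} (H : is_moncat M) (x y : M) :
  comp (tensm (idm x) (mrunit y)) (massoc x y (munit M)) = mrunit (tens x y).
Proof.
  pose proof (mcat H) as Hc.
  apply (faith_r H).
  apply (mono_iso Hc (massoc x y (munit M)) (massoc_inv x y (munit M)) _ _ (a_iso H _ _ _)).
  rewrite <- (tri H (tens x y) (munit M)), <- (t_id H x y).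
  rewrite (cassoc Hc), (a_nat H), <- (cassoc Hc), (pent H).
  rewrite (cassoc Hc), <- (t_comp_l1 H), (tri H), (cassoc Hc), <- (a_nat H), <- (cassoc Hc).
  rewrite (t_comp_r1 H). reflexivity.
Qed.

Lemma lr_unit {M : MonData} (H : is_moncat M) : mlunit (munit M) = mrunit (munit M).
Proof.
  pose proof (mcat H) as Hc.
  assert (E1 : mlunit (tens (munit M) (munit M)) = tensm (idm (munit M)) (mlunit (munit M))).
  { apply (mono_iso Hc (mlunit (munit M)) (mlunit_inv _) _ _ (l_iso H _)).
    rewrite (l_nat H). reflexivity. }
  apply (faith_r H). rewrite <- (tri H), <- E1, (kellyL H). reflexivity.
Qed.

Lemma t_splitl {M : MonData} (H : is_moncat M) {a b c a' b'} (f : hom M a b) (g : hom M b c) (h : hom M a' b') :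
  tensm (comp g f) h = comp (tensm g (idm b')) (tensm f h).
Proof. rewrite <- (t_comp H), (cidl (mcat H)). reflexivity. Qed.
Lemma t_splitr {M : MonData} (H : is_moncat M) {a b c a' b'} (f : hom M a b) (g : hom M b c) (h : hom M a' b') :
  tensm h (comp g f) = comp (tensm (idm b') g) (tensm h f).
Proof. rewrite <- (t_comp H), (cidl (mcat H)). reflexivity. Qed.
Lemma t_splitl' {M : MonData} (H : is_moncat M) {a b c a' b'} (f : hom M a b) (g : hom M b c) (h : hom M a' b') :
  tensm (comp g f) h = comp (tensm g h) (tensm f (idm a')).
Proof. rewrite <- (t_comp H), (cidr (mcat H)). reflexivity. Qed.
Lemma t_splitr' {M : MonData} (H : is_moncat M) {a b c a' b'} (f : hom M a b) (g : hom M b c) (h : hom M a' b') :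
  tensm h (comp g f) = comp (tensm h g) (tensm (idm a') f).
Proof. rewrite <- (t_comp H), (cidr (mcat H)). reflexivity. Qed.

Lemma qphi_iso {C : MonData} (H : is_moncat C) (o o' : qob C) : inverse_pair (qphi C o o') (qphi_inv C o o').
Proof.
  destruct o as [a|]; [destruct o' as [b|]|]; simpl.
  - apply (inv_id (mcat H)).
  - apply (r_iso H).
  - apply (l_iso H).
Qed.

Lemma qtensm_id {C : MonData} (H : is_moncat C) (o o' : qob C) :
  qtensm C o o o' o' (idm (Par C o)) (idm (Par C o')) = idm (Par C (qtens o o')).
Proof. unfold qtensm. rewrite (t_id H), (cidl (mcat H)). apply (inv_r (mcat H) _ _ (qphi_iso H o o')). Qed.

Lemma qtensm_comp {C : MonData} (H : is_moncat C) (a b c a' b' c' : qob C) f g f' g' :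
  qtensm C a c a' c' (comp g f) (comp g' f')
  = comp (qtensm C b c b' c' g g') (qtensm C a b a' b' f f').
Proof.
  pose proof (mcat H) as Hc. unfold qtensm.
  rewrite (t_comp H). rewrite <- !(cassoc Hc). f_equal. f_equal.
  rewrite (cancel_l Hc _ _ _ (qphi_iso H b b')). reflexivity.
Qed.

Lemma qtensm_phi {C : MonData} (H : is_moncat C) (a b a' b' : qob C) f g :
  comp (qtensm C a b a' b' f g) (qphi C a a') = comp (qphi C b b') (tensm f g).
Proof.
  pose proof (mcat H) as Hc. unfold qtensm.
  rewrite <- !(cassoc Hc). rewrite (inv_l Hc _ _ (qphi_iso H a a')), (cidr Hc). reflexivity.
Qed.

Lemma qtensm_idl {C : MonData} (H : is_moncat C) (a b : qob C) g :
  qtensm C None None a b (idm (munit C)) g = g.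
Proof.
  pose proof (mcat H) as Hc. unfold qtensm. simpl.
  rewrite (cassoc Hc), (l_nat H), <- (cassoc Hc). rewrite (inv_r Hc _ _ (l_iso H _)). apply (cidr Hc).
Qed.

Lemma lr_unit_inv {C : MonData} (H : is_moncat C) : mlunit_inv (munit C) = mrunit_inv (munit C).
Proof.
  pose proof (mcat H) as Hc.
  apply (mono_iso Hc (mrunit (munit C)) (mrunit_inv (munit C))).
  - apply (r_iso H).
  - transitivity (idm (munit C)).
    + rewrite <- (lr_unit H). apply (inv_r Hc _ _ (l_iso H _)).
    + symmetry. apply (inv_r Hc _ _ (r_iso H _)).
Qed.

Lemma qtensm_idr {C : MonData} (H : is_moncat C) (a b : qob C) f :
  comp (qrunit C b) (qtensm C a b None None f (idm (munit C))) = comp f (qrunit C a).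
Proof.
  pose proof (mcat H) as Hc. unfold qtensm.
  destruct a as [a|], b as [b|]; simpl in *; rewrite ?(lr_unit H), ?(lr_unit_inv H);
  rewrite !(cidl Hc), !(cidr Hc);
  rewrite (cassoc Hc), (r_nat H), <- (cassoc Hc); rewrite (inv_r Hc _ _ (r_iso H _)); apply (cidr Hc).
Qed.

Lemma qtensm_idrS {C : MonData} (H : is_moncat C) (a b : ntree C) f :
  qtensm C (Some a) (Some b) None None f (idm (munit C)) = f.
Proof.
  pose proof (mcat H) as Hc.
  pose proof (qtensm_idr H (Some a) (Some b) f) as E. simpl in E. rewrite (cidl Hc), (cidr Hc) in E. exact E.
Qed.

Definition Psi (C : MonData) (o o' o'' : qob C) :
  hom C (tens (tens (Par C o) (Par C o')) (Par C o'')) (Par C (qtens (qtens o o') o'')) :=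
  comp (qphi C (qtens o o') o'') (tensm (qphi C o o') (idm (Par C o''))).
Definition Phi (C : MonData) (o o' o'' : qob C) :
  hom C (tens (Par C o) (tens (Par C o') (Par C o''))) (Par C (qtens o (qtens o' o''))) :=
  comp (qphi C o (qtens o' o'')) (tensm (idm (Par C o)) (qphi C o' o'')).

Lemma qassoc_char {C : MonData} (H : is_moncat C) (o o' o'' : qob C) :
  comp (qassoc C o o' o'') (Psi C o o' o'')
  = comp (Phi C o o' o'') (massoc (Par C o) (Par C o') (Par C o'')).
Proof.
  pose proof (mcat H) as Hc. unfold Psi, Phi.
  destruct o as [a|], o' as [b|], o'' as [c|]; simpl; rewrite ?(cidl Hc), ?(t_id H), ?(cidl Hc).
  - apply (cidr Hc).
  - rewrite (cidr Hc). symmetry. apply (kellyR H).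
  - symmetry. apply (tri H).
  - rewrite <- (cassoc Hc), (tri H). reflexivity.
  - rewrite (cidr Hc). symmetry. apply (kellyL H).
  - rewrite (l_nat H), <- (cassoc Hc), (kellyL H). reflexivity.
  - rewrite (l_nat H), <- (cassoc Hc), (kellyL H). reflexivity.
  - rewrite (l_nat H), <- (cassoc Hc), (kellyL H). reflexivity.
Qed.

Lemma Psi_iso {C : MonData} (H : is_moncat C) (o o' o'' : qob C) :
  inverse_pair (Psi C o o' o'') (comp (tensm (qphi_inv C o o') (idm _)) (qphi_inv C (qtens o o') o'')).
Proof.
  apply (inv_comp (mcat H)). apply (inv_tens H). apply (qphi_iso H). apply (inv_id (mcat H)). apply (qphi_iso H).
Qed.

Lemma Psi_nat {C : MonData} (H : is_moncat C) (a b a' b' a'' b'' : qob C) f f' f'' :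
  comp (qtensm C (qtens a a') (qtens b b') a'' b'' (qtensm C a b a' b' f f') f'') (Psi C a a' a'')
  = comp (Psi C b b' b'') (tensm (tensm f f') f'').
Proof.
  pose proof (mcat H) as Hc. unfold Psi.
  rewrite (cassoc Hc), (qtensm_phi H), <- (cassoc Hc), <- (cassoc Hc). f_equal.
  rewrite <- (t_comp H), (qtensm_phi H), (cidr Hc), (t_splitl H). reflexivity.
Qed.

Lemma Phi_nat {C : MonData} (H : is_moncat C) (a b a' b' a'' b'' : qob C) f f' f'' :
  comp (qtensm C a b (qtens a' a'') (qtens b' b'') f (qtensm C a' b' a'' b'' f' f'')) (Phi C a a' a'')
  = comp (Phi C b b' b'') (tensm f (tensm f' f'')).
Proof.
  pose proof (mcat H) as Hc. unfold Phi.
  rewrite (cassoc Hc), (qtensm_phi H), <- (cassoc Hc), <- (cassoc Hc). f_equal.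
  rewrite <- (t_comp H), (qtensm_phi H), (cidr Hc), (t_splitr H). reflexivity.
Qed.

Lemma qassoc_nat {C : MonData} (H : is_moncat C) (a b a' b' a'' b'' : qob C) f f' f'' :
  comp (qassoc C b b' b'') (qtensm C (qtens a a') (qtens b b') a'' b'' (qtensm C a b a' b' f f') f'')
  = comp (qtensm C a b (qtens a' a'') (qtens b' b'') f (qtensm C a' b' a'' b'' f' f'')) (qassoc C a a' a'').
Proof.
  pose proof (mcat H) as Hc.
  apply (epi_iso Hc _ _ _ _ (Psi_iso H a a' a'')).
  rewrite <- !(cassoc Hc), (Psi_nat H), (cassoc Hc), (qassoc_char H), <- (cassoc Hc), (a_nat H).
  rewrite (cassoc Hc), <- (Phi_nat H), <- (cassoc Hc), <- (qassoc_char H). reflexivity.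
Qed.

Lemma qtensm_SS {C : MonData} (H : is_moncat C) (a b c d : ntree C) f g :
  qtensm C (Some a) (Some b) (Some c) (Some d) f g = tensm f g.
Proof. unfold qtensm. simpl. rewrite (cidl (mcat H)), (cidr (mcat H)). reflexivity. Qed.

Lemma qmon_is {C : MonData} (H : is_moncat C) : is_moncat (qmon C).
Proof.
  pose proof (mcat H) as Hc.
  unfold is_moncat. simpl.
  split; [|split; [|split; [|split; [|split; [|split; [|split; [|split; [|split; [|split]]]]]]]]].
  - destruct Hc as (h1 & h2 & h3). split; [|split]; intros; simpl; auto.
  - intros; apply (qtensm_id H).
  - intros; apply (qtensm_comp H).
  - intros; apply (qassoc_nat H).
  - intros [x|] [y|] [z|]; simpl; first [apply (a_iso H) | apply (inv_id Hc)].
  - intros. rewrite (cidl Hc), (cidr Hc). apply (qtensm_idl H).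
  - intros; apply (inv_id Hc).
  - intros; apply (qtensm_idr H).
  - intros [x|]; simpl; apply (inv_id Hc).
  - intros [w|] [x|] [y|] [z|]; simpl;
      rewrite ?(qtensm_SS H), ?(qtensm_idl H), ?(qtensm_idrS H), ?(t_id H), ?(cidl Hc), ?(cidr Hc); try reflexivity.
    apply (pent H).
  - intros [x|] y; simpl; rewrite (qtensm_id H); apply (cidl Hc).
Qed.

Lemma qmon_nonstrict (C : MonData) : is_nonstrict (qmon C).
Proof.
  intros [Ha _]. destruct (Ha (Some (Leaf (munit C))) (Some (Leaf (munit C))) (Some (Leaf (munit C)))) as [e _].
  simpl in e. inversion e.
Qed.

Lemma sF_id {C D : MonData} {F : MonFun C D} (H : is_strong F) (a : C) : fmap F (idm a) = idm (fob F a).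
Proof. apply H. Qed.
Lemma sF_comp {C D : MonData} {F : MonFun C D} (H : is_strong F) {a b c} (f : hom C a b) (g : hom C b c) :
  fmap F (comp g f) = comp (fmap F g) (fmap F f).
Proof. apply H. Qed.
Lemma sF_gnat {C D : MonData} {F : MonFun C D} (H : is_strong F) {a a' b b'} (f : hom C a b) (f' : hom C a' b') :
  comp (fgam F b b') (tensm (fmap F f) (fmap F f')) = comp (fmap F (tensm f f')) (fgam F a a').
Proof. apply H. Qed.
Lemma sF_giso {C D : MonData} {F : MonFun C D} (H : is_strong F) (x y : C) : inverse_pair (fgam F x y) (fgam_inv F x y).
Proof. apply H. Qed.
Lemma sF_uiso {C D : MonData} {F : MonFun C D} (H : is_strong F) : inverse_pair (funit F) (funit_inv F).
Proof. apply H. Qed.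
Lemma sF_assoc {C D : MonData} {F : MonFun C D} (H : is_strong F) (x y z : C) :
      comp (fmap F (massoc x y z))
           (comp (fgam F (tens x y) z) (tensm (fgam F x y) (idm (fob F z))))
      = comp (fgam F x (tens y z))
             (comp (tensm (idm (fob F x)) (fgam F y z))
                   (massoc (fob F x) (fob F y) (fob F z))).
Proof. apply H. Qed.
Lemma sF_lu {C D : MonData} {F : MonFun C D} (H : is_strong F) (x : C) :
      comp (fmap F (mlunit x))
           (comp (fgam F (munit C) x) (tensm (funit F) (idm (fob F x))))
      = mlunit (fob F x).
Proof. apply H. Qed.
Lemma sF_ru {C D : MonData} {F : MonFun C D} (H : is_strong F) (x : C) :
      comp (fmap F (mrunit x))
           (comp (fgam F x (munit C)) (tensm (idm (fob F x)) (funit F)))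
      = mrunit (fob F x).
Proof. apply H. Qed.

Lemma betaN_iso {C D : MonData} (HD : is_moncat D) (F : MonFun C D) (HF : is_strong F) (t : ntree C) :
  inverse_pair (betaN F t) (betaN_inv F t).
Proof.
  induction t as [x|l IHl r IHr]; simpl.
  - apply (inv_id (mcat HD)).
  - apply (inv_comp (mcat HD)). apply (inv_tens HD); assumption. apply (sF_giso HF).
Qed.

Lemma qbeta_iso {C D : MonData} (HD : is_moncat D) (F : MonFun C D) (HF : is_strong F) (o : qob C) :
  inverse_pair (qbeta F o) (qbeta_inv F o).
Proof. destruct o as [t|]; simpl. apply (betaN_iso HD F HF). apply (sF_uiso HF). Qed.

Lemma t_sep {M : MonData} (H : is_moncat M) {a b c d} (f : hom M a b) (g : hom M c d) :
  tensm f g = comp (tensm f (idm d)) (tensm (idm a) g).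
Proof. rewrite <- (t_comp H), (cidl (mcat H)), (cidr (mcat H)). reflexivity. Qed.
Lemma t_sep' {M : MonData} (H : is_moncat M) {a b c d} (f : hom M a b) (g : hom M c d) :
  tensm f g = comp (tensm (idm b) g) (tensm f (idm c)).
Proof. rewrite <- (t_comp H), (cidl (mcat H)), (cidr (mcat H)). reflexivity. Qed.

Lemma qfmap_id {C D : MonData} (HD : is_moncat D) (F : MonFun C D) (HF : is_strong F) (a : qob C) :
  qfmap F a a (idm (Par C a)) = idm (Par D (qfob F a)).
Proof.
  unfold qfmap. rewrite (sF_id HF), (cidl (mcat HD)). apply (inv_l (mcat HD) _ _ (qbeta_iso HD F HF a)).
Qed.

Lemma qfmap_comp {C D : MonData} (HD : is_moncat D) (F : MonFun C D) (HF : is_strong F) (a b c : qob C) f g :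
  qfmap F a c (comp g f) = comp (qfmap F b c g) (qfmap F a b f).
Proof.
  pose proof (mcat HD) as Hc. unfold qfmap. rewrite (sF_comp HF).
  rewrite <- !(cassoc Hc). do 2 f_equal. rewrite (cancel_r Hc _ _ _ (qbeta_iso HD F HF b)). reflexivity.
Qed.

Lemma beta_tens {C D : MonData} (HC : is_moncat C) (HD : is_moncat D) (F : MonFun C D) (HF : is_strong F) (o o' : qob C) :
  comp (qbeta F (qtens o o')) (comp (qfgam F o o') (qphi D (qfob F o) (qfob F o')))
  = comp (fmap F (qphi C o o')) (comp (fgam F (Par C o) (Par C o')) (tensm (qbeta F o) (qbeta F o'))).
Proof.
  pose proof (mcat HD) as Hc.
  destruct o as [a|], o' as [b|]; simpl; rewrite (cidl Hc).
  - rewrite (cidr Hc), (sF_id HF), (cidl Hc). reflexivity.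
  - rewrite (t_sep' HD), (cassoc Hc), (cassoc Hc), <- (cassoc Hc (tensm (idm _) (funit F))), (sF_ru HF), (r_nat HD). reflexivity.
  - rewrite (t_sep HD), (cassoc Hc), (cassoc Hc), <- (cassoc Hc (tensm (funit F) (idm _))), (sF_lu HF), (l_nat HD). reflexivity.
  - rewrite (t_sep HD), (cassoc Hc), (cassoc Hc), <- (cassoc Hc (tensm (funit F) (idm _))), (sF_lu HF), (l_nat HD). reflexivity.
Qed.

Ltac ra Hc := repeat rewrite <- (cassoc Hc).

Lemma qfmap_tens {C D : MonData} (HC : is_moncat C) (HD : is_moncat D) (F : MonFun C D) (HF : is_strong F)
  (a a' b b' : qob C) f f' :
   comp (qfgam F b b')
     (qtensm D (qfob F a) (qfob F b) (qfob F a') (qfob F b') (qfmap F a b f) (qfmap F a' b' f')) =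
   comp (qfmap F (qtens a a') (qtens b b') (qtensm C a b a' b' f f')) (qfgam F a a').
Proof.
  pose proof (mcat HD) as Hc.
  apply (mono_iso Hc (qbeta F (qtens b b')) (qbeta_inv F _) _ _ (qbeta_iso HD F HF _)).
  apply (epi_iso Hc (qphi D (qfob F a) (qfob F a')) (qphi_inv D _ _) _ _ (qphi_iso HD _ _)).
  ra Hc. rewrite (qtensm_phi HD).
  rewrite (cassoc Hc _ (qphi D _ _) (qfgam F _ _)), (cassoc Hc _ (comp (qfgam F _ _) (qphi D _ _)) (qbeta F _)).
  rewrite (beta_tens HC HD F HF). ra Hc.
  rewrite <- (t_comp HD). unfold qfmap at 1 2. rewrite (cancel_r Hc (qbeta F b) (qbeta_inv F b) _ (qbeta_iso HD F HF b)), (cancel_r Hc (qbeta F b') (qbeta_inv F b') _ (qbeta_iso HD F HF b')).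
  rewrite (t_comp HD). rewrite (cassoc Hc _ (tensm (fmap F f) (fmap F f'))), (sF_gnat HF).
  unfold qfmap. ra Hc. rewrite (cancel_r Hc (qbeta F (qtens b b')) (qbeta_inv F _) _ (qbeta_iso HD F HF _)).
  ra Hc. rewrite (beta_tens HC HD F HF). ra Hc. rewrite (cassoc Hc _ (fmap F (qphi C _ _))), <- (sF_comp HF).
  rewrite (qtensm_phi HC), (sF_comp HF). ra Hc. reflexivity.
Qed.

Lemma qF_strong {C D : MonData} (HC : is_moncat C) (HD : is_moncat D) (F : MonFun C D) (HF : is_strong F) :
  is_strong (qF F).
Proof.
  pose proof (mcat HD) as Hc.
  unfold is_strong. simpl.
  split; [|split; [|split; [|split; [|split; [|split; [|split]]]]]].
  - intros; apply (qfmap_id HD F HF).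
  - intros; apply (qfmap_comp HD F HF).
  - intros; apply (qfmap_tens HC HD F HF).
  - intros [x|] [y|]; simpl; apply (inv_id Hc).
  - apply (inv_id Hc).
  - intros [x|] [y|] [z|]; simpl; rewrite ?(qtensm_id HD), ?(cidl Hc), ?(cidr Hc).
    2-8: match goal with |- qfmap _ ?o _ _ = _ => exact (qfmap_id HD _ HF o) end.
    unfold qfmap. simpl.
    apply (mono_iso Hc _ _ _ _ (betaN_iso HD F HF (Node x (Node y z)))). simpl.
    rewrite (cancel_r Hc _ _ _ (betaN_iso HD F HF (Node x (Node y z)))).
    rewrite (t_splitl HD), (t_splitr HD). ra Hc.
    rewrite (cassoc Hc (tensm (tensm (betaN F x) (betaN F y)) (betaN F z))).
    rewrite (cassoc Hc (tensm (tensm (betaN F x) (betaN F y)) (betaN F z))).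
    rewrite (sF_assoc HF). ra Hc. rewrite (a_nat HD). reflexivity.
  - intros x. rewrite (qfmap_id HD F HF), (qtensm_idl HD), !(cidl Hc). reflexivity.
  - intros [x|]; simpl; rewrite ?(qtensm_id HD), ?(cidl Hc), ?(cidr Hc).
    all: match goal with |- qfmap _ ?o _ _ = _ => exact (qfmap_id HD _ HF o) end.
Qed.

Lemma qF_strict {C D : MonData} (HC : is_moncat C) (HD : is_moncat D) (F : MonFun C D) (HF : is_strong F) :
  is_strict (qF F).
Proof.
  split; [apply (qF_strong HC HD F HF)|split].
  - intros [x|] [y|]; exists eq_refl; reflexivity.
  - exists eq_refl; reflexivity.
Qed.

Lemma beta_alpha {C D : MonData} (HD : is_moncat D) {F G : MonFun C D} (a : NatData F G)
  (Ht : forall x y : C, comp (a (tens x y)) (fgam F x y) = comp (fgam G x y) (tensm (a x) (a y)))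
  (Hu : comp (a (munit C)) (funit F) = funit G) (o : qob C) :
  comp (qbeta G o) (qN a o) = comp (a (Par C o)) (qbeta F o).
Proof.
  pose proof (mcat HD) as Hc.
  destruct o as [t|]; simpl.
  - induction t as [x|l IHl r IHr]; simpl.
    + rewrite (cidl Hc), (cidr Hc). reflexivity.
    + rewrite <- (cassoc Hc), <- (t_comp HD), IHl, IHr, (t_comp HD), (cassoc Hc), <- Ht, (cassoc Hc). reflexivity.
  - rewrite (cidr Hc). symmetry. exact Hu.
Qed.

Lemma qN_eq {C D : MonData} (HD : is_moncat D) {F G : MonFun C D} (HG : is_strong G) (a : NatData F G)
  (Ht : forall x y : C, comp (a (tens x y)) (fgam F x y) = comp (fgam G x y) (tensm (a x) (a y)))
  (Hu : comp (a (munit C)) (funit F) = funit G) (o : qob C) :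
  qN a o = comp (qbeta_inv G o) (comp (a (Par C o)) (qbeta F o)).
Proof.
  pose proof (mcat HD) as Hc.
  apply (mono_iso Hc _ _ _ _ (qbeta_iso HD G HG o)).
  rewrite (cancel_r Hc _ _ _ (qbeta_iso HD G HG o)). apply (beta_alpha HD a Ht Hu).
Qed.

Lemma qN_monnat {C D : MonData} (HC : is_moncat C) (HD : is_moncat D) (F G : MonFun C D) (a : NatData F G) :
  is_strong F -> is_strong G -> is_monnat a -> is_monnat (qN a).
Proof.
  intros HF HG [Hn [Ht Hu]]. pose proof (mcat HD) as Hc.
  unfold is_monnat. simpl.
  split; [|split].
  - intros x y f. rewrite !(qN_eq HD HG a Ht Hu). unfold qfmap. ra Hc.
    rewrite (cancel_r Hc _ _ _ (qbeta_iso HD F HF y)), (cancel_r Hc _ _ _ (qbeta_iso HD G HG x)).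
    rewrite (cassoc Hc _ (fmap F f)), Hn. ra Hc. reflexivity.
  - intros [x|] [y|]; simpl; rewrite ?(qtensm_SS HD), ?(qtensm_idl HD), ?(qtensm_idrS HD), ?(cidl Hc), ?(cidr Hc); reflexivity.
  - apply (cidl Hc).
Qed.

Lemma eq_hom_pi {C : Cat} {a b : C} (e e' : a = b) : eq_hom e = eq_hom e'.
Proof. rewrite (proof_irrelevance _ e e'). reflexivity. Qed.
Lemma eq_hom_refl {C : Cat} {a : C} (e : a = a) : eq_hom e = idm a.
Proof. rewrite (proof_irrelevance _ e eq_refl). reflexivity. Qed.
Lemma eq_hom_comp {C : Cat} (H : is_cat C) {a b c : C} (e1 : a = b) (e2 : b = c) :
  comp (eq_hom e2) (eq_hom e1) = eq_hom (eq_trans e1 e2).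
Proof. destruct e1, e2. apply (cidl H). Qed.
Lemma eq_hom_comp_k {C : Cat} (H : is_cat C) {a b c d : C} (e1 : a = b) (e2 : b = c) (k : hom C d a) :
  comp (eq_hom e2) (comp (eq_hom e1) k) = comp (eq_hom (eq_trans e1 e2)) k.
Proof. rewrite (cassoc H), (eq_hom_comp H). reflexivity. Qed.
Lemma eq_hom_qcat {C : MonData} {o o' : qob C} (e : o = o') :
  @eq_hom (qcat C) o o' e = @eq_hom C (Par C o) (Par C o') (f_equal (Par C) e).
Proof. destruct e. reflexivity. Qed.
Lemma tensm_eq_hom {M : MonData} (H : is_moncat M) {a b c d : M} (e1 : a = b) (e2 : c = d) :
  tensm (eq_hom e1) (eq_hom e2) = eq_hom (f_equal2 tens e1 e2).
Proof. destruct e1, e2. simpl. rewrite eq_hom_refl. apply (t_id H). Qed.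
Lemma fmap_eq_hom {C D : MonData} {F : MonFun C D} (HF : is_strong F) {a b : C} (e : a = b) :
  fmap F (eq_hom e) = eq_hom (f_equal (fob F) e).
Proof. destruct e. simpl. apply (sF_id HF). Qed.
Lemma qtensm_eq_hom {M : MonData} (H : is_moncat M) {a b c d : qob M} (e1 : a = b) (e2 : c = d) :
  qtensm M a b c d (@eq_hom (qcat M) _ _ e1) (@eq_hom (qcat M) _ _ e2) = @eq_hom (qcat M) _ _ (f_equal2 qtens e1 e2).
Proof. destruct e1, e2. simpl. rewrite eq_hom_refl. apply (qtensm_id H). Qed.
Lemma qfmap_eq_hom {C D : MonData} (HD : is_moncat D) {F : MonFun C D} (HF : is_strong F) {a b : qob C} (e : a = b) :
  qfmap F a b (@eq_hom (qcat C) _ _ e) = @eq_hom (qcat D) _ _ (f_equal (qfob F) e).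
Proof. destruct e. simpl. apply (qfmap_id HD F HF). Qed.
Lemma qfgam_eq_hom {C D : MonData} (F : MonFun C D) (x y : qob C) :
  exists e, qfgam F x y = @eq_hom (qcat D) _ _ e.
Proof. destruct x as [x|], y as [y|]; exists eq_refl; reflexivity. Qed.
Lemma qfgam_inv_eq_hom {C D : MonData} (F : MonFun C D) (x y : qob C) :
  exists e, qfgam_inv F x y = @eq_hom (qcat D) _ _ e.
Proof. destruct x as [x|], y as [y|]; exists eq_refl; reflexivity. Qed.

Lemma inv_unique {C : Cat} (H : is_cat C) {a b} (f : hom C a b) g g' :
  inverse_pair f g -> inverse_pair f g' -> g = g'.
Proof.
  intros [h1 h2] [h1' h2']. rewrite <- (cidr H g), <- h2', (cassoc H), h1. apply (cidl H).
Qed.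

Lemma MonFun_ext {C D : MonData} (HD : is_moncat D) (F G : MonFun C D) (ea : forall x, fob F x = fob G x)
 (Hm : forall a b (f : hom C a b), comp (eq_hom (ea b)) (fmap F f) = comp (fmap G f) (eq_hom (ea a)))
 (Hg : forall x y, comp (eq_hom (ea (tens x y))) (fgam F x y) = comp (fgam G x y) (tensm (eq_hom (ea x)) (eq_hom (ea y))))
 (Hgi : forall x y, comp (tensm (eq_hom (ea x)) (eq_hom (ea y))) (fgam_inv F x y) = comp (fgam_inv G x y) (eq_hom (ea (tens x y))))
 (Hu : comp (eq_hom (ea (munit C))) (funit F) = funit G)
 (Hui : funit_inv F = comp (funit_inv G) (eq_hom (ea (munit C)))) : F = G.
Proof.
  pose proof (mcat HD) as Hc.
  destruct F as [f1 m1 g1 gi1 u1 ui1], G as [f2 m2 g2 gi2 u2 ui2]; simpl in *.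
  assert (e : f1 = f2) by (apply functional_extensionality; exact ea). subst f2.
  assert (E : ea = fun x => eq_refl) by (apply functional_extensionality_dep; intro; apply proof_irrelevance).
  subst ea. simpl in *.
  assert (m1 = m2).
  { apply functional_extensionality_dep; intro a. apply functional_extensionality_dep; intro b.
    apply functional_extensionality; intro f. specialize (Hm a b f). rewrite (cidl Hc), (cidr Hc) in Hm. exact Hm. }
  assert (g1 = g2).
  { apply functional_extensionality_dep; intro a. apply functional_extensionality_dep; intro b.
    specialize (Hg a b). rewrite (t_id HD), (cidl Hc), (cidr Hc) in Hg. exact Hg. }
  assert (gi1 = gi2).
  { apply functional_extensionality_dep; intro a. apply functional_extensionality_dep; intro b.
    specialize (Hgi a b). rewrite (t_id HD), (cidl Hc), (cidr Hc) in Hgi. exact Hgi. }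
  rewrite (cidl Hc) in Hu. rewrite (cidr Hc) in Hui. subst. reflexivity.
Qed.

Lemma map_id {A : Type} (t : ntree A) : ntree_map (fun x => x) t = t.
Proof. induction t; simpl; congruence. Qed.
Lemma qfob_id (C : MonData) (o : qob C) : qfob (idMF C) o = o.
Proof. destruct o; simpl; [rewrite map_id|]; reflexivity. Qed.

Lemma betaN_id {C : MonData} (HC : is_moncat C) (t : ntree C) (E : parN C (ntree_map (fob (idMF C)) t) = parN C t) :
  betaN (idMF C) t = eq_hom E.
Proof.
  pose proof (mcat HC) as Hc.
  revert E; induction t as [x|l IHl r IHr]; intros E; simpl.
  - rewrite eq_hom_refl. reflexivity.
  - rewrite (IHl (f_equal (parN C) (map_id l))), (IHr (f_equal (parN C) (map_id r))), (tensm_eq_hom HC), (cidl Hc).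
    apply eq_hom_pi.
Qed.
Lemma betaN_inv_id {C : MonData} (HC : is_moncat C) (t : ntree C) (E : parN C t = parN C (ntree_map (fob (idMF C)) t)) :
  betaN_inv (idMF C) t = eq_hom E.
Proof.
  pose proof (mcat HC) as Hc.
  revert E; induction t as [x|l IHl r IHr]; intros E; simpl.
  - rewrite eq_hom_refl. reflexivity.
  - rewrite (IHl (eq_sym (f_equal (parN C) (map_id l)))), (IHr (eq_sym (f_equal (parN C) (map_id r)))), (tensm_eq_hom HC), (cidr Hc).
    apply eq_hom_pi.
Qed.
Lemma qbeta_id {C : MonData} (HC : is_moncat C) (o : qob C) :
  qbeta (idMF C) o = eq_hom (f_equal (Par C) (qfob_id C o)).
Proof. destruct o as [t|]; simpl. apply (betaN_id HC). rewrite eq_hom_refl. reflexivity. Qed.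
Lemma qbeta_inv_id {C : MonData} (HC : is_moncat C) (o : qob C) :
  qbeta_inv (idMF C) o = eq_hom (eq_sym (f_equal (Par C) (qfob_id C o))).
Proof. destruct o as [t|]; simpl. apply (betaN_inv_id HC). rewrite eq_hom_refl. reflexivity. Qed.

Ltac eqsolve Hc :=
  repeat rewrite eq_hom_qcat;
  repeat (rewrite (eq_hom_comp_k Hc) || rewrite (eq_hom_comp Hc));
  rewrite ?eq_hom_refl, ?(cidl Hc), ?(cidr Hc);
  first [reflexivity | apply eq_hom_pi | (f_equal; apply eq_hom_pi)].

Lemma qF_id {C : MonData} (HC : is_moncat C) : qF (idMF C) = idMF (qmon C).
Proof.
  pose proof (mcat HC) as Hc. pose proof (qmon_is HC) as HQ.
  apply (MonFun_ext HQ (qF (idMF C)) (idMF (qmon C)) (qfob_id C)); simpl.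
  - intros a b f. unfold qfmap. rewrite (qbeta_id HC), (qbeta_inv_id HC). simpl. eqsolve Hc.
  - intros x y. destruct (qfgam_eq_hom (idMF C) x y) as [e ->]. rewrite (qtensm_eq_hom HC). eqsolve Hc.
  - intros x y. destruct (qfgam_inv_eq_hom (idMF C) x y) as [e ->]. rewrite (qtensm_eq_hom HC). eqsolve Hc.
  - eqsolve Hc.
  - eqsolve Hc.
Qed.

Lemma map_comp {A B C' : Type} (f : A -> B) (g : B -> C') (t : ntree A) :
  ntree_map (fun x => g (f x)) t = ntree_map g (ntree_map f t).
Proof. induction t; simpl; congruence. Qed.
Lemma qfob_comp {C D E : MonData} (F : MonFun C D) (G : MonFun D E) (o : qob C) :
  qfob (compMF G F) o = qfob G (qfob F o).
Proof. destruct o; simpl; [rewrite map_comp|]; reflexivity. Qed.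

Lemma fmap_iso {C D : MonData} {F : MonFun C D} (HF : is_strong F) {a b : C} (f : hom C a b) g :
  inverse_pair f g -> inverse_pair (fmap F f) (fmap F g).
Proof. intros [h1 h2]; split; rewrite <- (sF_comp HF); [rewrite h1|rewrite h2]; apply (sF_id HF). Qed.

Lemma qbeta_iso_g {C D : MonData} (HD : is_moncat D) (F : MonFun C D)
  (Hg : forall x y, inverse_pair (fgam F x y) (fgam_inv F x y)) (Hu : inverse_pair (funit F) (funit_inv F)) (o : qob C) :
  inverse_pair (qbeta F o) (qbeta_inv F o).
Proof.
  destruct o as [t|]; simpl; [|exact Hu].
  induction t as [x|l IHl r IHr]; simpl.
  - apply (inv_id (mcat HD)).
  - apply (inv_comp (mcat HD)). apply (inv_tens HD); assumption. apply Hg.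
Qed.

Lemma betaN_comp {C D E : MonData} (HE : is_moncat E) (F : MonFun C D) (G : MonFun D E) (HF : is_strong F) (HG : is_strong G)
  (t : ntree C) (Eq : parN E (ntree_map (fob (compMF G F)) t) = parN E (ntree_map (fob G) (ntree_map (fob F) t))) :
  betaN (compMF G F) t = comp (fmap G (betaN F t)) (comp (betaN G (ntree_map (fob F) t)) (eq_hom Eq)).
Proof.
  pose proof (mcat HE) as Hc.
  revert Eq; induction t as [x|l IHl r IHr]; intros Eq; simpl.
  - rewrite eq_hom_refl, (sF_id HG), !(cidl Hc). reflexivity.
  - rewrite (IHl (f_equal (parN E) (map_comp (fob F) (fob G) l))), (IHr (f_equal (parN E) (map_comp (fob F) (fob G) r))).
    rewrite !(t_comp HE), (tensm_eq_hom HE), (sF_comp HG). ra Hc.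
    rewrite (cassoc Hc _ (fgam G _ _) (fmap G (tensm _ _))), <- (sF_gnat HG). ra Hc.
    do 4 f_equal. apply eq_hom_pi.
Qed.

Lemma betaN_inv_comp {C D E : MonData} (HD : is_moncat D) (HE : is_moncat E) (F : MonFun C D) (G : MonFun D E) (HF : is_strong F) (HG : is_strong G)
  (t : ntree C) (Eq : parN E (ntree_map (fob (compMF G F)) t) = parN E (ntree_map (fob G) (ntree_map (fob F) t))) :
  betaN_inv (compMF G F) t = comp (eq_hom (eq_sym Eq)) (comp (betaN_inv G (ntree_map (fob F) t)) (fmap G (betaN_inv F t))).
Proof.
  pose proof (mcat HE) as Hc.
  apply (inv_unique Hc (betaN (compMF G F) t)).
  - refine (qbeta_iso_g HE (compMF G F) _ _ (Some t)).
    + intros x y. simpl. apply (inv_comp Hc). apply (sF_giso HG). apply (fmap_iso HG). apply (sF_giso HF).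
    + simpl. apply (inv_comp Hc). apply (sF_uiso HG). apply (fmap_iso HG). apply (sF_uiso HF).
  - rewrite (betaN_comp HE F G HF HG t Eq), (cassoc Hc). apply (inv_comp Hc).
    + destruct Eq. simpl. apply (inv_id Hc).
    + apply (inv_comp Hc). apply (betaN_iso HE G HG). apply (fmap_iso HG). apply (betaN_iso HD F HF).
Qed.

Lemma qbeta_comp {C D E : MonData} (HE : is_moncat E) (F : MonFun C D) (G : MonFun D E) (HF : is_strong F) (HG : is_strong G)
  (o : qob C) (Eq : Par E (qfob (compMF G F) o) = Par E (qfob G (qfob F o))) :
  qbeta (compMF G F) o = comp (fmap G (qbeta F o)) (comp (qbeta G (qfob F o)) (eq_hom Eq)).
Proof.
  destruct o as [t|]; simpl.
  - apply (betaN_comp HE F G HF HG t).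
  - rewrite eq_hom_refl, (cidr (mcat HE)). reflexivity.
Qed.
Lemma qbeta_inv_comp {C D E : MonData} (HD : is_moncat D) (HE : is_moncat E) (F : MonFun C D) (G : MonFun D E) (HF : is_strong F) (HG : is_strong G)
  (o : qob C) (Eq : Par E (qfob (compMF G F) o) = Par E (qfob G (qfob F o))) :
  qbeta_inv (compMF G F) o = comp (eq_hom (eq_sym Eq)) (comp (qbeta_inv G (qfob F o)) (fmap G (qbeta_inv F o))).
Proof.
  destruct o as [t|]; simpl.
  - apply (betaN_inv_comp HD HE F G HF HG t).
  - rewrite eq_hom_refl, (cidl (mcat HE)). reflexivity.
Qed.

Lemma qF_comp {C D E : MonData} (HC : is_moncat C) (HD : is_moncat D) (HE : is_moncat E) (F : MonFun C D) (G : MonFun D E)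
  (HF : is_strong F) (HG : is_strong G) : qF (compMF G F) = compMF (qF G) (qF F).
Proof.
  pose proof (mcat HE) as Hc. pose proof (qmon_is HE) as HQ.
  apply (MonFun_ext HQ (qF (compMF G F)) (compMF (qF G) (qF F)) (qfob_comp F G)); simpl.
  - intros a b f. unfold qfmap.
    rewrite (qbeta_comp HE F G HF HG a (f_equal (Par E) (qfob_comp F G a))).
    rewrite (qbeta_inv_comp HD HE F G HF HG b (f_equal (Par E) (qfob_comp F G b))).
    rewrite !eq_hom_qcat. rewrite !(sF_comp HG). ra Hc.
    rewrite (eq_hom_comp_k Hc), eq_hom_refl, (cidl Hc). reflexivity.
  - intros x y. destruct (qfgam_eq_hom (compMF G F) x y) as [e1 ->].
    destruct (qfgam_eq_hom F x y) as [e2 ->]. destruct (qfgam_eq_hom G (qfob F x) (qfob F y)) as [e3 ->].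
    rewrite (qfmap_eq_hom HE HG), (qtensm_eq_hom HE). eqsolve Hc.
  - intros x y. destruct (qfgam_inv_eq_hom (compMF G F) x y) as [e1 ->].
    destruct (qfgam_inv_eq_hom F x y) as [e2 ->]. destruct (qfgam_inv_eq_hom G (qfob F x) (qfob F y)) as [e3 ->].
    rewrite (qfmap_eq_hom HE HG), (qtensm_eq_hom HE). eqsolve Hc.
  - pose proof (qfmap_id HE G HG None) as Q; simpl in Q; rewrite Q. eqsolve Hc.
  - pose proof (qfmap_id HE G HG None) as Q; simpl in Q; rewrite Q. eqsolve Hc.
Qed.

Lemma qN_id {C D : MonData} (HD : is_moncat D) (F : MonFun C D) (o : qob C) :
  qN (idN F) o = idN (qF F) o.
Proof.
  destruct o as [t|]; simpl; [|reflexivity].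
  unfold idN; simpl. induction t as [x|l IHl r IHr]; simpl; [reflexivity|].
  rewrite IHl, IHr. apply (t_id HD).
Qed.

Lemma qN_vcomp {C D : MonData} (HD : is_moncat D) (F G H : MonFun C D) (a : NatData F G) (b : NatData G H) (o : qob C) :
  qN (vcomp b a) o = vcomp (qN b) (qN a) o.
Proof.
  unfold vcomp. destruct o as [t|]; simpl; [|symmetry; apply (cidl (mcat HD))].
  induction t as [x|l IHl r IHr]; simpl; [reflexivity|].
  rewrite IHl, IHr. apply (t_comp HD).
Qed.

Lemma castN_eq {C D : MonData} (HD : is_cat D) {F G F' G' : MonFun C D} (e1 : F = F') (e2 : G = G') (a : NatData F G) o :
  castN e1 e2 a o = comp (eq_hom (f_equal (fun H => fob H o) e2)) (comp (a o) (eq_hom (eq_sym (f_equal (fun H => fob H o) e1)))).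
Proof. destruct e1, e2. simpl. rewrite (cidl HD), (cidr HD). reflexivity. Qed.

Lemma qN_eq_g {C D : MonData} (HD : is_moncat D) {F G : MonFun C D} (a : NatData F G)
  (Hg : forall x y, inverse_pair (fgam G x y) (fgam_inv G x y)) (Hu' : inverse_pair (funit G) (funit_inv G))
  (Ht : forall x y : C, comp (a (tens x y)) (fgam F x y) = comp (fgam G x y) (tensm (a x) (a y)))
  (Hu : comp (a (munit C)) (funit F) = funit G) (o : qob C) :
  qN a o = comp (qbeta_inv G o) (comp (a (Par C o)) (qbeta F o)).
Proof.
  pose proof (mcat HD) as Hc.
  apply (mono_iso Hc _ _ _ _ (qbeta_iso_g HD G Hg Hu' o)).
  rewrite (cancel_r Hc _ _ _ (qbeta_iso_g HD G Hg Hu' o)). apply (beta_alpha HD a Ht Hu).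
Qed.

Lemma qN_hcomp {C D E : MonData} (HC : is_moncat C) (HD : is_moncat D) (HE : is_moncat E)
  (F F' : MonFun C D) (G G' : MonFun D E) (a : NatData F F') (b : NatData G G') :
  is_strong F -> is_strong F' -> is_strong G -> is_strong G' -> is_monnat a -> is_monnat b ->
  forall (e1 : qF (compMF G F) = compMF (qF G) (qF F))
         (e2 : qF (compMF G' F') = compMF (qF G') (qF F')) o,
  castN e1 e2 (qN (hcomp b a)) o = hcomp (qN b) (qN a) o.
Proof.
  intros HF HF' HG HG' [an [ta au]] [bn [bt bu]] e1 e2 o.
  pose proof (mcat HE) as Hc. pose proof (mcat HD) as Hd.
  rewrite (castN_eq (mcat (qmon_is HE))). simpl. rewrite !eq_hom_qcat.
  unfold hcomp at 2. simpl.
  rewrite (qN_eq_g HD a (sF_giso HF') (sF_uiso HF') ta au o).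
  rewrite (qN_eq_g HE b (sF_giso HG') (sF_uiso HG') bt bu (qfob F' o)).
  assert (Hg : forall x y, inverse_pair (fgam (compMF G' F') x y) (fgam_inv (compMF G' F') x y)).
  { intros x y; simpl. apply (inv_comp Hc). apply (sF_giso HG'). apply (fmap_iso HG'). apply (sF_giso HF'). }
  assert (Hu' : inverse_pair (funit (compMF G' F')) (funit_inv (compMF G' F'))).
  { simpl. apply (inv_comp Hc). apply (sF_uiso HG'). apply (fmap_iso HG'). apply (sF_uiso HF'). }
  assert (Ht : forall x y : C, comp (hcomp b a (tens x y)) (fgam (compMF G F) x y)
                 = comp (fgam (compMF G' F') x y) (tensm (hcomp b a x) (hcomp b a y))).
  { intros x y. unfold hcomp; simpl. ra Hc.
    rewrite (cassoc Hc _ (fmap G (fgam F x y)) (fmap G (a (tens x y)))), <- (sF_comp HG), ta, (sF_comp HG).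
    ra Hc. rewrite <- (sF_gnat HG). ra Hc.
    rewrite (cassoc Hc _ (fmap G (fgam F' x y)) (b _)), bn. ra Hc.
    rewrite (cassoc Hc _ (fgam G _ _) (b _)), bt. ra Hc. rewrite <- (t_comp HE). reflexivity. }
  assert (Hu : comp (hcomp b a (munit C)) (funit (compMF G F)) = funit (compMF G' F')).
  { unfold hcomp; simpl. ra Hc.
    rewrite (cassoc Hc _ (fmap G (funit F)) (fmap G (a _))), <- (sF_comp HG), au.
    rewrite (cassoc Hc (funit G)), bn, <- (cassoc Hc), bu. reflexivity. }
  rewrite (qN_eq_g HE (hcomp b a) Hg Hu' Ht Hu o).
  rewrite (qbeta_comp HE F G HF HG o (f_equal (Par E) (qfob_comp F G o))).
  rewrite (qbeta_inv_comp HD HE F' G' HF' HG' o (f_equal (Par E) (qfob_comp F' G' o))).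
  unfold qfmap, hcomp. rewrite !(sF_comp HG). ra Hc.
  rewrite (cancel_r Hc _ _ _ (qbeta_iso HE G HG (qfob F' o))).
  rewrite (cassoc Hc _ (fmap G (qbeta_inv F' o)) (b _)), bn. ra Hc.
  rewrite (eq_hom_comp_k Hc), eq_hom_refl, (cidl Hc).
  do 6 f_equal. rewrite (eq_hom_comp Hc), eq_hom_refl, (cidr Hc). reflexivity.
Qed.
Theorem mainTheorem12 :
  (* C |-> C_q : well defined, lands in non-strict monoidal categories *)
  (forall C : MonData, is_moncat C -> is_moncat (qmon C) /\ is_nonstrict (qmon C)) /\
  (* F |-> F_q : well defined, strict monoidal *)
  (forall (C D : MonData) (F : MonFun C D),
      is_moncat C -> is_moncat D -> is_strong F -> is_strict (qF F)) /\
  (* alpha |-> alpha_q : well defined, monoidal natural transformation *)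
  (forall (C D : MonData) (F G : MonFun C D) (a : NatData F G),
      is_moncat C -> is_moncat D -> is_strong F -> is_strong G -> is_monnat a ->
      is_monnat (qN a)) /\
  (* 2-functoriality: identity 1-cells *)
  (forall C : MonData, is_moncat C -> qF (idMF C) = idMF (qmon C)) /\
  (* composition of 1-cells *)
  (forall (C D E : MonData) (F : MonFun C D) (G : MonFun D E),
      is_moncat C -> is_moncat D -> is_moncat E -> is_strong F -> is_strong G ->
      qF (compMF G F) = compMF (qF G) (qF F)) /\
  (* identity 2-cells *)
  (forall (C D : MonData) (F : MonFun C D),
      is_moncat C -> is_moncat D -> is_strong F ->
      forall o, qN (idN F) o = idN (qF F) o) /\
  (* vertical composition of 2-cells *)
  (forall (C D : MonData) (F G H : MonFun C D) (a : NatData F G) (b : NatData G H),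
      is_moncat C -> is_moncat D -> is_strong F -> is_strong G -> is_strong H ->
      is_monnat a -> is_monnat b ->
      forall o, qN (vcomp b a) o = vcomp (qN b) (qN a) o) /\
  (* horizontal composition of 2-cells (transported along the 1-cell equalities) *)
  (forall (C D E : MonData) (F F' : MonFun C D) (G G' : MonFun D E)
          (a : NatData F F') (b : NatData G G'),
      is_moncat C -> is_moncat D -> is_moncat E ->
      is_strong F -> is_strong F' -> is_strong G -> is_strong G' ->
      is_monnat a -> is_monnat b ->
      forall (e1 : qF (compMF G F) = compMF (qF G) (qF F))
             (e2 : qF (compMF G' F') = compMF (qF G') (qF F')) o,
      castN e1 e2 (qN (hcomp b a)) o = hcomp (qN b) (qN a) o).
Proof.
  split; [|split; [|split; [|split; [|split; [|split; [|split]]]]]].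
  - intros C HC. split. apply (qmon_is HC). apply qmon_nonstrict.
  - intros C D F HC HD HF. apply (qF_strict HC HD F HF).
  - intros C D F G a HC HD HF HG Ha. apply (qN_monnat HC HD F G a HF HG Ha).
  - intros C HC. apply (qF_id HC).
  - intros C D E F G HC HD HE HF HG. apply (qF_comp HC HD HE F G HF HG).
  - intros C D F HC HD HF o. apply (qN_id HD).
  - intros C D F G H a b HC HD HF HG HH Ha Hb o. apply (qN_vcomp HD).
  - intros C D E F F' G G' a b HC HD HE HF HF' HG HG' Ha Hb e1 e2 o.
    apply (qN_hcomp HC HD HE F F' G G' a b HF HF' HG HG' Ha Hb).
Qed.
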